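(* Let $G=G(k,m,P)$ be a random intersection graph with set sizes $X_1,\dots,X_k$. For any integers $x_1,\dots,x_k$ such that the event $B=\{X_1=x_1,\dots,X_k=x_k\}$ has positive probability, $$\mathbb P\big(G\text{ has a rainbow }K_k\,\big|\,B\big)\le m^{-k(k-1)/2}(x_1x_2\cdots x_k)^{k-1}.$$
   Context: Random intersection graph: given positive integers $k,m$ and a probability measure $P$ on $\{0,\dots,m\}$, $G(k,m,P)$ has vertex set $[k]$ and attribute set $W$ with $|W|=m$; independent random subsets $S_1,\dots,S_k\subseteq W$ with $\mathbb P(S_v=S)=P(|S|)/\binom{m}{|S|}$; distinct $u,v$ adjacent iff $S_u\cap S_v\ne\emptyset$; $X_v=|S_v|$. ''$G$ has a rainbow $K_k$'' means there is an injective assignment of attributes to the $\binom k2$ pairs of vertices such that the attribute assigned to each pair $\{u,v\}$ lies in $S_u\cap S_v$. *)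

(* Defs.v *)
From HB Require Import structures.
From mathcomp Require Import all_boot all_order all_algebra.
Set Implicit Arguments. Unset Strict Implicit. Unset Printing Implicit Defensive.
Import Order.TTheory GRing.Theory Num.Theory.
Local Open Scope ring_scope.

(* Random intersection graph G(k,m,P): vertex set 'I_k, attribute set W = 'I_m.
   P : 'I_m.+1 -> R is the probability measure on {0,...,m}. *)
Definition outcome (k m : nat) := {ffun 'I_k -> {set 'I_m}}.

(* P(S_v = S) = P(|S|) / C(m,|S|); the S_v are independent. *)
Definition set_weight (R : realFieldType) (m : nat) (P : 'I_m.+1 -> R)
  (S : {set 'I_m}) : R :=
  P (inord #|S|) / ('C(m, #|S|))%:R.

Definition outcome_weight (R : realFieldType) (k m : nat) (P : 'I_m.+1 -> R)
  (S : outcome k m) : R :=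
  \prod_(v < k) set_weight P (S v).

Definition prob (R : realFieldType) (k m : nat) (P : 'I_m.+1 -> R)
  (E : pred (outcome k m)) : R :=
  \sum_(S : outcome k m | E S) outcome_weight P S.

Definition cond_prob (R : realFieldType) (k m : nat) (P : 'I_m.+1 -> R)
  (A B : pred (outcome k m)) : R :=
  prob P [pred S | A S && B S] / prob P B.

(* A pair {u,v} is represented by (u,v) with u < v. *)
Definition has_rainbow_clique (k m : nat) (S : outcome k m) : bool :=
  [exists f : {ffun 'I_k * 'I_k -> 'I_m},
     [forall u : 'I_k, forall v : 'I_k,
        (u < v)%N ==> (f (u, v) \in S u :&: S v)] &&
     [forall u : 'I_k, forall v : 'I_k, forall u' : 'I_k, forall v' : 'I_k,
        [&& (u < v)%N, (u' < v')%N & f (u, v) == f (u', v')] ==>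
          ((u == u') && (v == v'))]].

Definition sizes_event (k m : nat) (x : 'I_k -> int) : pred (outcome k m) :=
  [pred S : outcome k m | [forall v : 'I_k, (#|S v|%:Z == x v)]].

(* Main.v *)
Require Import Defs.
From HB Require Import structures.
From mathcomp Require Import all_boot all_order all_algebra.
From mathcomp Require Import zify ring.
Set Implicit Arguments. Unset Strict Implicit. Unset Printing Implicit Defensive.
Import Order.TTheory GRing.Theory Num.Theory.
Local Open Scope nat_scope.

Lemma bin_ffact_shift t : forall m n, (t <= n)%N ->
  ('C(m, n) * n ^_ t = 'C(m - t, n - t) * m ^_ t)%N.
Proof.
elim: t => [|t IH] m n ht; first by rewrite !subn0 !ffactn0.
case: n ht => [|n] // ht.
case: m => [|m].
  by rewrite bin0n /= ffact0n /= !muln0 mul0n.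
rewrite ffactSS mulnA (mulnC _ n.+1) -(mul_bin_diag m.+1 n) /= -mulnA (IH m n ht).
by rewrite ffactSS !subSS; ring.
Qed.

Lemma ffact_exp_le t m n : (n <= m)%N -> (n ^_ t * m ^ t <= m ^_ t * n ^ t)%N.
Proof.
move=> hnm; elim: t => [|t IH]; first by rewrite !ffactn0.
rewrite !ffactnSr !expnS.
have h : ((n - t) * m <= (m - t) * n)%N by nia.
have := leq_mul IH h.
by rewrite (mulnC m (m ^ t)) (mulnC n (n ^ t)); nia.
Qed.

Lemma bin_exp_le t m n : (t <= n)%N -> (n <= m)%N ->
  ('C(m - t, n - t) * m ^ t <= 'C(m, n) * n ^ t)%N.
Proof.
move=> htn hnm.
have hpos : (0 < m ^_ t)%N by rewrite ffact_gt0; apply: leq_trans hnm.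
rewrite -(leq_pmul2r hpos).
have e := bin_ffact_shift m htn.
have := ffact_exp_le t hnm.
have -> : ('C(m - t, n - t) * m ^ t * m ^_ t = 'C(m, n) * n ^_ t * m ^ t)%N.
  by rewrite e; ring.
move=> h; rewrite -mulnA -[X in (_ <= X)%N]mulnA leq_mul2l; apply/orP; right.
by rewrite (mulnC (n ^ t)).
Qed.

Lemma supsets_le m (T : {set 'I_m}) n : (n <= m)%N ->
  (#|[set A : {set 'I_m} | (T \subset A) && (#|A| == n)]| * m ^ #|T|
     <= 'C(m, n) * n ^ #|T|)%N.
Proof.
move=> hnm.
have [htn|hnt] := leqP #|T| n; last first.
  rewrite (_ : #|_| = 0%N) ?mul0n //.
  apply: eq_card0 => A; rewrite inE; apply/negP => /andP[/subset_leq_card h /eqP e].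
  by move: hnt; rewrite -e ltnNge h.
have -> : [set A : {set 'I_m} | (T \subset A) && (#|A| == n)] =
   [set B :|: T | B in [set B : {set 'I_m} | (B \subset ~: T) && (#|B| == (n - #|T|)%N)]].
  apply/setP => A; rewrite inE; apply/andP/imsetP.
    move=> [hTA /eqP hA]; exists (A :\: T).
      rewrite inE; apply/andP; split; first by apply/subsetP => y; rewrite !inE => /andP[].
      rewrite cardsD hA; move/setIidPr: hTA => ->; done.
    apply/setP => y; rewrite !inE; case yT: (y \in T) => /=.
      by rewrite (subsetP hTA).
    by rewrite orbF.
  move=> [B]; rewrite inE => /andP[hB /eqP hcB] ->; split; first exact: subsetUr.
  rewrite cardsU hcB.
  have -> : B :&: T = set0.
    apply/setP => y; rewrite !inE; apply/negP => /andP[yB yT].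
    by move/subsetP: hB => /(_ y yB); rewrite inE yT.
  by rewrite cards0 subn0 subnK.
rewrite card_in_imset; last first.
  move=> B1 B2; rewrite !inE => /andP[h1 _] /andP[h2 _] e.
  have d1 : B1 = (B1 :|: T) :\: T.
    rewrite setDUl setDv setU0; apply/esym/setDidPl.
    by rewrite disjoints_subset. 
  have d2 : B2 = (B2 :|: T) :\: T.
    rewrite setDUl setDv setU0; apply/esym/setDidPl.
    by rewrite disjoints_subset.
  by rewrite d1 d2 e.
rewrite cards_draws.
have -> : #|~: T| = (m - #|T|)%N by rewrite cardsCs setCK card_ord.
exact: bin_exp_le.
Qed.
Definition ltp k : pred ('I_k * 'I_k) := [pred p : 'I_k * 'I_k | (p.1 < p.2)%N].
Arguments ltp : clear implicits.

Lemma sum_lt k (v : 'I_k) : (\sum_(u < k) ((u < v)%N : nat) = v)%N.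
Proof.
rewrite -(big_mkord xpredT (fun u => ((u < v)%N : nat))).
rewrite (big_cat_nat _ (n := v)) //=; last exact: ltnW.
rewrite big_nat_cond (eq_bigr (fun _ => 1%N)); last first.
  by move=> i /andP[/andP[_ ->] _].
rewrite -big_nat_cond sum_nat_const_nat subn0 muln1.
rewrite big_nat_cond big1 ?addn0 //.
by move=> i /andP[/andP[h _] _]; rewrite ltnNge h.
Qed.

Lemma card_ltp k : #|ltp k| = 'C(k, 2).
Proof.
rewrite -sum1_card big_mkcond /=.
rewrite -(pair_bigA _ (fun u v => if (u, v) \in ltp k then 1%N else 0%N)) /=.
rewrite exchange_big /=.
rewrite -bin2_sum big_mkord; apply: eq_bigr => v _.
rewrite -[RHS](sum_lt v); apply: eq_bigr => u _.
by rewrite inE /=; case: (u < v)%N.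
Qed.

Section Comb.
Variables (k m : nat) (o : 'I_m).

Definition pr (u v : 'I_k) : 'I_k * 'I_k := if (u < v)%N then (u, v) else (v, u).

Definition Tv (g : {ffun 'I_k * 'I_k -> 'I_m}) (v : 'I_k) : {set 'I_m} :=
  [set g (pr u v) | u in [set~ v]].

Definition injb (g : {ffun 'I_k * 'I_k -> 'I_m}) : bool :=
  [forall p, forall q, [&& ltp k p, ltp k q & g p == g q] ==> (p == q)].

Definition goodg (g : {ffun 'I_k * 'I_k -> 'I_m}) : bool :=
  (g \in pffun_on o (ltp k) predT) && injb g.

Lemma card_good : (#|[pred g | goodg g]| <= m ^ 'C(k, 2))%N.
Proof.
rewrite -card_ltp -[X in (X ^ _)%N]card_ord -(card_pffun_on o (ltp k) predT).
apply: subset_leq_card; apply/subsetP => g; rewrite inE => /andP[] //.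
Qed.

Lemma pr_ltp u v : u != v -> ltp k (pr u v).
Proof.
rewrite /pr /ltp /= => huv; case: (ltnP u v) => //= h.
have : (nat_of_ord u != nat_of_ord v) by [].
lia.
Qed.

Lemma card_Tv g v : goodg g -> #|Tv g v| = (k - 1)%N.
Proof.
case/andP => _ /forallP hi.
rewrite card_in_imset; first by rewrite cardsC1 card_ord subn1.
move=> u u'; rewrite !inE => hu hu' e.
have := forallP (hi (pr u v)) (pr u' v); rewrite !pr_ltp // e eqxx /= => /eqP.
rewrite /pr; case: (ltnP u v); case: (ltnP u' v) => //= _ _.
all: by case=> *; subst; rewrite ?eqxx in hu hu' *.
Qed.


Lemma rainbow_good (S : outcome k m) : has_rainbow_clique S ->
  exists g, goodg g && [forall v, Tv g v \subset S v].
Proof.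
case/existsP => f /andP[/forallP h1 /forallP h2].
exists [ffun p : 'I_k * 'I_k => if (p.1 < p.2)%N then f p else o].
apply/andP; split; [apply/andP; split|].
- apply/pffun_onP; split => //.
  apply/subsetP => p; rewrite inE /= ffunE; case: ifP => hp; first by [].
  by rewrite eqxx.
- apply/forallP => p; apply/forallP => q; apply/implyP => /and3P[hp hq].
  have hp' : (p.1 < p.2)%N := hp.
  have hq' : (q.1 < q.2)%N := hq.
  rewrite !ffunE hp' hq' => e.
  have := forallP (forallP (forallP (h2 p.1) p.2) q.1) q.2.
  case: p e hp hp' => p1 p2; case: q hq hq' => q1 q2 /= _ hq' e _ hp'.
  by rewrite hp' hq' e /= => /andP[/eqP -> /eqP ->].
- apply/forallP => v; apply/subsetP => a /imsetP[u hu ->]; rewrite ffunE.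
  have hl := pr_ltp (u := u) (v := v).
  rewrite !inE in hu; have hl' : ((pr u v).1 < (pr u v).2)%N := hl hu.
  rewrite hl'.
  have := forallP (h1 (pr u v).1) (pr u v).2; rewrite hl' /= => hin.
  move: hin; rewrite -surjective_pairing.
  rewrite inE /pr; case: (ltnP u v) => _ /andP[] //.
Qed.

End Comb.

Lemma prod_expn k (F : 'I_k -> nat) j :
  ((\prod_(v < k) F v) ^ j = \prod_(v < k) (F v) ^ j)%N.
Proof.
elim: j => [|j IH]; first by rewrite expn0 big1.
by rewrite expnS IH -big_split; apply: eq_bigr => v _; rewrite expnS.
Qed.

Lemma card_fam_prod k m (F : 'I_k -> pred {set 'I_m}) :
  #|[pred S : outcome k m | [forall v, S v \in F v]]| = (\prod_(v < k) #|F v|)%N.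
Proof.
have := card_family F; rewrite foldrE big_map big_enum /= => <-.
by apply: eq_card => S; rewrite inE /=.
Qed.

Section Count.
Variables (k m : nat) (o : 'I_m) (n : 'I_k -> nat).
Hypothesis hn : forall v, (n v <= m)%N.

Definition Bn : pred (outcome k m) := [pred S : outcome k m | [forall v, #|S v| == n v]].
Definition Eg (g : {ffun 'I_k * 'I_k -> 'I_m}) : pred (outcome k m) :=
  [pred S : outcome k m | [forall v, Tv g v \subset S v] && Bn S].

Lemma card_Bn : #|Bn| = (\prod_(v < k) 'C(m, n v))%N.
Proof.
rewrite (eq_card (B := [pred S : outcome k m | [forall v, S v \in [pred A : {set 'I_m} | #|A| == n v]]])); last by [].
rewrite card_fam_prod.
apply: eq_bigr => v _; rewrite -[m in 'C(m, _)]card_ord -card_draws.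
by apply: eq_card => A; rewrite !inE.
Qed.

Lemma card_Eg g : goodg o g ->
  (#|Eg g| * m ^ (k * (k - 1)) <= #|Bn| * (\prod_(v < k) n v) ^ (k - 1))%N.
Proof.
move=> hg.
have -> : #|Eg g| = (\prod_(v < k)
     #|[set A : {set 'I_m} | (Tv g v \subset A) && (#|A| == n v)]|)%N.
  rewrite (eq_card (B := [pred S : outcome k m | [forall v, S v \in
       [pred A : {set 'I_m} | (Tv g v \subset A) && (#|A| == n v)]]])); last first.
    move=> S; rewrite !inE /=.
    apply/andP/forallP => [[/forallP h1 /forallP h2] v|h]; first by rewrite inE h1 h2.
    by split; apply/forallP => v; have /andP[] := h v.
  rewrite card_fam_prod; apply: eq_bigr => v _.
  by apply: eq_card => A; rewrite !inE.
have e : (m ^ (k * (k - 1)) = \prod_(v < k) m ^ (k - 1))%N.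
  by rewrite prod_nat_const card_ord -expnM mulnC.
rewrite e.
rewrite -big_split card_Bn prod_expn -big_split /=.
apply: leq_prod => v _.
by rewrite -(card_Tv v hg); apply: supsets_le.
Qed.


Lemma step1 :
  (#|[pred S : outcome k m | has_rainbow_clique S && Bn S]|
     <= \sum_(g | goodg o g) #|Eg g|)%N.
Proof.
rewrite -sum1_card.
apply: (@leq_trans (\sum_(S in [pred S : outcome k m | has_rainbow_clique S && Bn S])
          \sum_(g | goodg o g) ((S \in Eg g) : nat))).
  apply: leq_sum => S; rewrite inE => /andP[hr hb].
  have [g /andP[hg hT]] := rainbow_good o hr.
  by rewrite (bigD1 g) //= inE hT hb.
rewrite exchange_big /=; apply: leq_sum => g _.
rewrite -sum1_card big_mkcond [X in (_ <= X)%N]big_mkcond /=.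
apply: leq_sum => S _.
by case: (S \in Eg g); case: (S \in _).
Qed.

Lemma count_main :
  (#|[pred S : outcome k m | has_rainbow_clique S && Bn S]| * m ^ 'C(k, 2)
     <= #|Bn| * (\prod_(v < k) n v) ^ (k - 1))%N.
Proof.
have hk2 : (k * (k - 1) = 'C(k, 2) + 'C(k, 2))%N.
  rewrite addnn -mul2n -(mul_bin_diag k 1) bin1; lia.
have hm0 : (0 < m)%N by case: (m) o => [[]|].
have hp : (0 < m ^ 'C(k, 2))%N by rewrite expn_gt0 hm0.
rewrite -(leq_pmul2r hp) -mulnA -expnD -hk2.
apply: (@leq_trans ((\sum_(g | goodg o g) #|Eg g|) * m ^ (k * (k - 1)))).
  by rewrite leq_mul2r step1 orbT.
rewrite big_distrl /=.
apply: (@leq_trans (\sum_(g | goodg o g) (#|Bn| * (\prod_(v < k) n v) ^ (k - 1)))).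
  by apply: leq_sum => g hg; apply: card_Eg.
rewrite sum_nat_const mulnC leq_mul2l card_good orbT //.
Qed.

End Count.

Local Open Scope ring_scope.

Theorem mainTheorem15 (R : realFieldType) (k m : nat) (P : 'I_m.+1 -> R)
  (hk : (0 < k)%N) (hm : (0 < m)%N)
  (hP0 : forall i, 0 <= P i) (hP1 : \sum_(i < m.+1) P i = 1)
  (x : 'I_k -> int)
  (hB : 0 < prob P (@sizes_event k m x)) :
  cond_prob P (@has_rainbow_clique k m) (@sizes_event k m x)
    <= (m%:R ^+ 'C(k, 2))^-1 * (\prod_(v < k) (x v)%:~R) ^+ (k - 1).
Proof.
have [S0 hS0|hnone] := pickP (@sizes_event k m x); last first.
  by move: hB; rewrite /prob big_pred0 // ltxx.
pose n := fun v => #|S0 v|.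
have hx : forall v, x v = (n v)%:Z.
  by move: hS0 => /forallP h v; rewrite (eqP (h v)).
have hn : forall v, (n v <= m)%N.
  by move=> v; rewrite /n; apply: leq_trans (max_card _) _; rewrite card_ord.
have hBe : forall S : outcome k m, sizes_event x S = Bn n S.
  by move=> S; rewrite /= /Bn inE; apply: eq_forallb => v; rewrite hx eqz_nat.
pose c := outcome_weight P S0.
have hw : forall S : outcome k m, Bn n S -> outcome_weight P S = c.
  move=> S /forallP h; apply: eq_bigr => v _.
  by rewrite /set_weight (eqP (h v)).
have hprob : forall Q : pred (outcome k m), (forall S : outcome k m, Q S -> Bn n S) ->
    prob P Q = (#|Q|)%:R * c.
  move=> Q hQ; rewrite /prob (eq_bigr (fun _ => c)); last by move=> S /hQ /hw.
  by rewrite sumr_const mulr_natl.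



rewrite /cond_prob !hprob; last first.
- by move=> S /andP[_]; rewrite hBe.
- by move=> S; rewrite hBe.
have eAB : #|[pred S : outcome k m | has_rainbow_clique S && sizes_event x S]| =
    #|[pred S : outcome k m | has_rainbow_clique S && Bn n S]|.
  by apply: eq_card => S; rewrite !inE /= hBe.
have eB : #|@sizes_event k m x| = #|@Bn k m n|.
  by apply: eq_card => S; rewrite -!topredE /= hBe.
have hB0 : (0 < #|@Bn k m n|)%N by apply/card_gt0P; exists S0; rewrite -topredE /= -hBe.
have hc : c != 0.
  apply/eqP => c0; move: hB; rewrite (hprob (sizes_event x)) ?c0 ?mulr0 ?ltxx //.
  by move=> S; rewrite hBe.
rewrite eAB eB invfM mulrACA divff // mulr1.
rewrite (eq_bigr (fun v => (n v)%:R)); last by move=> v _; rewrite hx.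
rewrite -natr_prod -!natrX.
have key := count_main (Ordinal hm) hn.
have hM : (0 < m ^ 'C(k, 2))%N by rewrite expn_gt0 hm.
rewrite [X in _ <= X]mulrC ler_pdivrMr ?ltr0n // mulrAC ler_pdivlMr ?ltr0n // -!natrM ler_nat.
rewrite [X in (_ <= X)%N]mulnC; exact: key.
Qed.
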